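(* For every $\Gamma \in \mathrm{WR}(\Lambda_h)$, $$\cos\theta(\Gamma) = \frac{p}{q} \le \frac12, \qquad \sin\theta(\Gamma) = \frac{r}{q}\sqrt3 \ge \frac{\sqrt3}{2},$$ for some relatively prime triple $(p,r,q) \in \mathbb{Z}^3_{\ge 0}$.
   Context: $\Lambda_h = \begin{bmatrix} 1 & -1/2 \\ 0 & \sqrt3/2\end{bmatrix}\mathbb{Z}^2$ is the hexagonal lattice. For a full-rank lattice $\Gamma\subset\mathbb{R}^2$, $|\Gamma| = \min\{\|y\|^2 : y\in\Gamma\setminus\{0\}\}$; $\Gamma$ is well-rounded (WR) if it has a basis of vectors $y$ with $\|y\|^2=|\Gamma|$ (a minimal basis); such a basis can be chosen with the angle between its vectors in $[\pi/3,\pi/2]$, and this angle, denoted $\theta(\Gamma)$, is an invariant of $\Gamma$. $\mathrm{WR}(\Lambda_h)$ is the set of full-rank WR sublattices of $\Lambda_h$. *)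

(* Defs.v *)
From Stdlib Require Import Reals ZArith.
Open Scope R_scope.

(* Points of the hexagonal lattice Lambda_h are encoded by their integer
   coordinates (a,b) w.r.t. the basis (1,0), (-1/2, sqrt3/2). *)
Definition hex (v : Z * Z) : R * R :=
  (IZR (fst v) - IZR (snd v) / 2, IZR (snd v) * sqrt 3 / 2).

Definition dot (x y : R * R) : R := fst x * fst y + snd x * snd y.
Definition sqnorm (x : R * R) : R := dot x x.
Definition det2 (x y : R * R) : R := fst x * snd y - snd x * fst y.

Definition zadd (u v : Z * Z) : Z * Z := (fst u + fst v, snd u + snd v)%Z.
Definition zopp (u : Z * Z) : Z * Z := (- fst u, - snd u)%Z.
Definition zlin (m n : Z) (u v : Z * Z) : Z * Z :=
  (m * fst u + n * fst v, m * snd u + n * snd v)%Z.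

Definition is_sublattice (G : Z * Z -> Prop) : Prop :=
  G (0, 0)%Z /\ (forall u v, G u -> G v -> G (zadd u v)) /\
  (forall u, G u -> G (zopp u)).

Definition full_rank (G : Z * Z -> Prop) : Prop :=
  exists u v, G u /\ G v /\ det2 (hex u) (hex v) <> 0.

Definition is_basis (G : Z * Z -> Prop) (u v : Z * Z) : Prop :=
  G u /\ G v /\ det2 (hex u) (hex v) <> 0 /\
  forall w, G w -> exists m n : Z, w = zlin m n u v.

Definition lattice_min (G : Z * Z -> Prop) (m : R) : Prop :=
  (exists w, G w /\ w <> (0, 0)%Z /\ sqnorm (hex w) = m) /\
  (forall w, G w -> w <> (0, 0)%Z -> m <= sqnorm (hex w)).

Definition minimal_basis (G : Z * Z -> Prop) (u v : Z * Z) : Prop :=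
  is_basis G u v /\
  lattice_min G (sqnorm (hex u)) /\ sqnorm (hex v) = sqnorm (hex u).

Definition WR_hex (G : Z * Z -> Prop) : Prop :=
  is_sublattice G /\ full_rank G /\ exists u v, minimal_basis G u v.

Definition angle (x y : R * R) : R :=
  acos (dot x y / (sqrt (sqnorm x) * sqrt (sqnorm y))).

(* Main.v *)
Require Import Defs.
From Stdlib Require Import Reals ZArith Lra Lia.
Open Scope R_scope.
Lemma reduce (P R Q : Z) : (0<=P)%Z -> (0<=R)%Z -> (0<Q)%Z ->
  exists p r q : Z, (0<=p)%Z /\ (0<=r)%Z /\ (0<=q)%Z /\ Z.gcd (Z.gcd p r) q = 1%Z /\
   IZR P / IZR Q = IZR p / IZR q /\ IZR R / IZR Q = IZR r / IZR q.
Proof.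
  intros HP HR HQ.
  remember (Z.gcd (Z.gcd P R) Q) as g eqn:Hgdef.
  assert (Hg0 : (0 <= g)%Z) by (rewrite Hgdef; apply Z.gcd_nonneg).
  assert (HgQ : (g | Q)%Z) by (rewrite Hgdef; apply Z.gcd_divide_r).
  assert (HgP : (g | P)%Z) by (rewrite Hgdef; apply Z.divide_trans with (Z.gcd P R); [apply Z.gcd_divide_l|apply Z.gcd_divide_l]).
  assert (HgR : (g | R)%Z) by (rewrite Hgdef; apply Z.divide_trans with (Z.gcd P R); [apply Z.gcd_divide_l|apply Z.gcd_divide_r]).
  destruct HgQ as [q Hq]. destruct HgP as [p Hp]. destruct HgR as [r Hr].
  assert (Hgp : (0 < g)%Z) by (destruct (Z.eq_dec g 0); [rewrite e in Hq; lia | lia]).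
  exists p, r, q.
  assert (0 <= p)%Z by nia. assert (0 <= r)%Z by nia. assert (0 < q)%Z by nia.
  repeat split; try lia.
  - assert (Hgg : g = (Z.gcd (Z.gcd p r) q * g)%Z).
    { rewrite Hgdef at 1. rewrite Hp, Hr, Hq, !Z.gcd_mul_mono_r_nonneg; lia. }
    nia.
  - rewrite Hp, Hq, !mult_IZR. assert (IZR g <> 0) by (apply not_0_IZR; lia).
    assert (IZR q <> 0) by (apply not_0_IZR; lia). field; auto.
  - rewrite Hr, Hq, !mult_IZR. assert (IZR g <> 0) by (apply not_0_IZR; lia).
    assert (IZR q <> 0) by (apply not_0_IZR; lia). field; auto.
Qed.

Theorem lemma3p1 :
  forall (G : Z * Z -> Prop), WR_hex G ->
  forall u v : Z * Z, minimal_basis G u v ->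
  PI / 3 <= angle (hex u) (hex v) <= PI / 2 ->
  exists p r q : Z,
    (0 <= p)%Z /\ (0 <= r)%Z /\ (0 <= q)%Z /\
    Z.gcd (Z.gcd p r) q = 1%Z /\
    cos (angle (hex u) (hex v)) = IZR p / IZR q /\
    IZR p / IZR q <= 1 / 2 /\
    sin (angle (hex u) (hex v)) = IZR r / IZR q * sqrt 3 /\
    IZR r / IZR q * sqrt 3 >= sqrt 3 / 2.
Proof.
  intros G _ [a b] [c d] [[_ [_ [Hdet _]]] [_ Hnv]] Hang.
  set (D := (2*a*c - a*d - b*c + 2*b*d)%Z).
  set (e := (a*d - b*c)%Z).
  set (N := (a*a - a*b + b*b)%Z).
  set (M := (c*c - c*d + d*d)%Z).
  assert (H3 : sqrt 3 * sqrt 3 = 3) by (apply sqrt_sqrt; lra).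
  assert (Hsu : sqnorm (hex (a,b)) = IZR N).
  { unfold sqnorm, dot, hex, N; cbn [fst snd]. repeat (rewrite plus_IZR || rewrite minus_IZR || rewrite mult_IZR).
    replace (IZR b * sqrt 3 / 2 * (IZR b * sqrt 3 / 2)) with (IZR b * IZR b * (sqrt 3 * sqrt 3) / 4) by field. rewrite H3. field. }
  assert (Hsv : sqnorm (hex (c,d)) = IZR M).
  { unfold sqnorm, dot, hex, M; cbn [fst snd]. repeat (rewrite plus_IZR || rewrite minus_IZR || rewrite mult_IZR).
    replace (IZR d * sqrt 3 / 2 * (IZR d * sqrt 3 / 2)) with (IZR d * IZR d * (sqrt 3 * sqrt 3) / 4) by field. rewrite H3. field. }
  assert (Hdot : dot (hex (a,b)) (hex (c,d)) = IZR D / 2).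
  { unfold dot, hex, D; cbn [fst snd]. repeat (rewrite plus_IZR || rewrite minus_IZR || rewrite mult_IZR).
    replace (IZR b * sqrt 3 / 2 * (IZR d * sqrt 3 / 2)) with (IZR b * IZR d * (sqrt 3 * sqrt 3) / 4) by field. rewrite H3. field. }
  assert (Hd2 : det2 (hex (a,b)) (hex (c,d)) = sqrt 3 / 2 * IZR e).
  { unfold det2, hex, e; cbn [fst snd]. repeat (rewrite plus_IZR || rewrite minus_IZR || rewrite mult_IZR). field. }
  rewrite Hsu, Hsv in Hnv. apply eq_IZR in Hnv.
  assert (He : e <> 0%Z).
  { intro E. apply Hdet. rewrite Hd2, E. lra. }
  assert (HN : (0 < N)%Z).
  { unfold N. destruct (Z_le_gt_dec (a*a - a*b + b*b) 0); [|lia].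
    exfalso. apply He. unfold e. assert (b = 0%Z) by nia. assert (a = 0%Z) by nia. subst; lia. }
  assert (Hlag : (4*N*N = D*D + 3*e*e)%Z).
  { rewrite <- Hnv at 2. unfold N, M, D, e. ring. }
  assert (HNr : 0 < IZR N) by (apply IZR_lt; exact HN).
  assert (Hx : dot (hex (a,b)) (hex (c,d)) /
     (sqrt (sqnorm (hex (a,b))) * sqrt (sqnorm (hex (c,d)))) = IZR D / (2 * IZR N)).
  { rewrite Hdot, Hsu, Hsv, Hnv, sqrt_sqrt by lra. field. lra. }
  assert (HlagR : 4 * IZR N * IZR N = IZR D * IZR D + 3 * IZR e * IZR e).
  { assert (H := f_equal IZR Hlag). rewrite ?plus_IZR, ?mult_IZR in H. exact H. }
  assert (HD1 : -1 <= IZR D / (2 * IZR N) <= 1).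
  { assert (IZR D * IZR D <= (2 * IZR N) * (2 * IZR N)) by nra.
    split.
    - apply Rmult_le_reg_r with (2 * IZR N); [lra|]. unfold Rdiv. rewrite Rmult_assoc, Rinv_l by lra. nra.
    - apply Rmult_le_reg_r with (2 * IZR N); [lra|]. unfold Rdiv. rewrite Rmult_assoc, Rinv_l by lra. nra. }
  unfold angle in *. rewrite Hx in *.
  set (x := IZR D / (2 * IZR N)) in *.
  assert (Hcos : cos (acos x) = x) by (apply cos_acos; auto).
  assert (Hsin : sin (acos x) = IZR (Z.abs e) / (2 * IZR N) * sqrt 3).
  { rewrite sin_acos by auto.
    assert (Hsq : 1 - x² = (IZR (Z.abs e) / (2 * IZR N) * sqrt 3)²).
    { unfold Rsqr, x. rewrite abs_IZR.
      replace (Rabs (IZR e) / (2 * IZR N) * sqrt 3 * (Rabs (IZR e) / (2 * IZR N) * sqrt 3))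
        with ((Rabs (IZR e) * Rabs (IZR e)) * (sqrt 3 * sqrt 3) / (4 * IZR N * IZR N)) by (field; lra).
      rewrite <- Rabs_mult. rewrite (Rabs_pos_eq (IZR e * IZR e)) by nra. rewrite H3.
      replace (1 - IZR D / (2 * IZR N) * (IZR D / (2 * IZR N)))
        with ((4 * IZR N * IZR N - IZR D * IZR D) / (4 * IZR N * IZR N)) by (field; lra).
      replace (4 * IZR N * IZR N - IZR D * IZR D) with (3 * IZR e * IZR e) by lra. field. lra. }
    rewrite Hsq, sqrt_Rsqr; auto.
    apply Rmult_le_pos; [|apply sqrt_pos]. apply Rmult_le_pos.
    - apply IZR_le; lia.
    - left; apply Rinv_0_lt_compat; lra. }
  assert (HPI : 0 < PI) by apply PI_RGT_0.
  assert (Hx0 : 0 <= x).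
  { rewrite <- Hcos. apply cos_ge_0; lra. }
  assert (HD0 : (0 <= D)%Z).
  { apply le_IZR. 
    assert (IZR D = x * (2 * IZR N)) by (unfold x; field; lra). nra. }
  destruct (reduce D (Z.abs e) (2*N) HD0 ltac:(lia) ltac:(lia)) as [p [r [q [Hp [Hr [Hq [Hg [E1 E2]]]]]]]].
  rewrite mult_IZR in E1, E2.
  exists p, r, q. repeat split; auto.
  - rewrite Hcos. unfold x. exact E1.
  - rewrite <- E1. fold x. rewrite <- Hcos, <- cos_PI3.
    destruct (Rle_lt_or_eq_dec _ _ (proj1 Hang)) as [Hl|Hl].
    + left. apply cos_decreasing_1; lra.
    + rewrite Hl; right; reflexivity.
  - rewrite Hsin, E2. reflexivity.
  - rewrite <- E2, <- Hsin, <- sin_PI3. apply Rle_ge.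
    destruct (Rle_lt_or_eq_dec _ _ (proj1 Hang)) as [Hl|Hl].
    + left. apply sin_increasing_1; lra.
    + rewrite Hl; right; reflexivity.
Qed.
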